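(* Let $G$ be a finite simple graph with a perfect matching $M$ and let $\mathcal{C}$ be an optimal edge $2$-colouring of $G$; write $\mathrm{mcl}(u)$ for the colour of the edge of $M$ at vertex $u$. Let $F$ be a forest of rooted trees which is a subgraph of $G\setminus M$, with set of roots $R$ and set of leaves $L$, each tree equipped with a depth-first ordering, and let $\preceq$ be the induced partial order on $V(F)$ (see context). Suppose that for each $u\in R\cup L$, every edge of $F$ incident with $u$ has colour $\mathrm{mcl}(u)$. Then there exists a set $P=\{(u_i,v_i): i=1,\ldots,|L|\}$ of pairs of vertices of $F$ satisfying: (a) for $i\ne j$, $u_i\ne u_j$; (b) $u_i\prec v_i$ for all $1\le i\le |L|$; in particular the path $u_iFv_i$ exists; (c) $\mathrm{mcl}(u_i)=\mathrm{mcl}(v_i)$ for all $i$; (d) the path $u_iFv_i$ is monochromatic with all edges coloured $\mathrm{mcl}(u_i)$, for all $i$; (e) for every internal vertex $z$ of $u_iFv_i$, $\mathrm{mcl}(z)\ne\mathrm{mcl}(u_i)$, for all $i$; (f) for $i\ne j$ with $u_iv_i\in M$ and $u_jv_j\in M$, the paths $u_iFv_i$ and $u_jFv_j$ do not share an internal vertex.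
   Context: $G\setminus M$ is the spanning subgraph of $G$ with edge set $E(G)\setminus M$. An edge $2$-colouring assigns colours to edges (not necessarily properly) so that every vertex sees at most $2$ distinct colours on its incident edges; optimal means it uses the maximum number of colours. In a rooted tree, leaves are the non-root vertices with no children; $R$ and $L$ are the unions over the trees of $F$ of their roots and leaves. For a rooted tree $T$ with a depth-first indexing $\mathrm{dfs}_T$ (descendants receive larger indices than their ancestors), the order $\preceq_T$ is $u\preceq_T v$ iff $\mathrm{dfs}_T(u)\ge \mathrm{dfs}_T(v)$. The partial order $\preceq$ on $V(F)$ restricts to $\preceq_T$ on each component tree $T$, and vertices in different trees are incomparable; $u\prec v$ means $u\preceq v$, $u\ne v$. $xFy$ denotes the unique $x$–$y$ path in $F$ (when $x,y$ lie in the same tree); its internal vertices are those other than $x,y$. *)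

(* Defs.v *)
From mathcomp Require Import all_boot.
Set Implicit Arguments. Unset Strict Implicit. Unset Printing Implicit Defensive.

Section GraphDefs.
Variable T : finType.

Definition simple_graph (adj : rel T) := symmetric adj /\ irreflexive adj.

Definition edges (adj : rel T) : {set {set T}} :=
  [set s | [exists x, exists y, adj x y && (s == [set x; y])]].

Definition perfect_matching (adj : rel T) (M : {set {set T}}) :=
  M \subset edges adj /\ forall x : T, #|[set m in M | x \in m]| = 1.

Definition seen_colours (adj : rel T) (c : {set T} -> nat) (x : T) : seq nat :=
  undup [seq c m | m in [set m in edges adj | x \in m]].

Definition edge_2_colouring (adj : rel T) (c : {set T} -> nat) :=
  forall x : T, size (seen_colours adj c x) <= 2.

Definition ncolours (adj : rel T) (c : {set T} -> nat) : nat :=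
  size (undup [seq c m | m in edges adj]).

Definition optimal_2_colouring (adj : rel T) (c : {set T} -> nat) :=
  edge_2_colouring adj c /\
  forall c' : {set T} -> nat, edge_2_colouring adj c' -> ncolours adj c' <= ncolours adj c.

Definition mcl (M : {set {set T}}) (c : {set T} -> nat) (x : T) : nat :=
  c (odflt set0 [pick m in M | x \in m]).

(* Rooted forest F given by vertex set VF and parent map par (None = root). *)
Definition prel (par : T -> option T) : rel T := fun x y => par x == Some y.

Definition anc (par : T -> option T) (a v : T) : bool := connect (prel par) v a.

Definition same_tree (par : T -> option T) (u v : T) : bool :=
  [exists r, anc par r u && anc par r v].

Definition rooted_forest (adj : rel T) (M : {set {set T}}) (VF : {set T})
    (par : T -> option T) :=
  [/\ forall x, x \notin VF -> par x = None,
      forall x y, par x = Some y -> [/\ y \in VF, adj x y & [set x; y] \notin M] &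
      forall x y, prel par x y -> ~~ connect (prel par) y x].

Definition forest_roots (VF : {set T}) (par : T -> option T) : {set T} :=
  [set x in VF | par x == None].

Definition forest_leaves (VF : {set T}) (par : T -> option T) : {set T} :=
  [set x in VF | (par x != None) && [forall w, par w != Some x]].

Definition desc (par : T -> option T) (v : T) : {set T} := [set w | anc par v w].

(* dfs is a depth-first (preorder) indexing of every tree of F: injective on
   each tree, and the descendants of v are exactly the vertices of its tree
   whose index lies in [dfs v, dfs v + #descendants). *)
Definition dfs_indexing (VF : {set T}) (par : T -> option T) (dfs : T -> nat) :=
  forall v w, v \in VF -> w \in VF -> same_tree par v w ->
    (dfs v = dfs w -> v = w) /\
    anc par v w = (dfs v <= dfs w < dfs v + #|desc par v|).

Definition preceq (VF : {set T}) (par : T -> option T) (dfs : T -> nat) (u v : T) :=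
  [&& u \in VF, v \in VF, same_tree par u v & dfs v <= dfs u].

Definition prec (VF : {set T}) (par : T -> option T) (dfs : T -> nat) (u v : T) :=
  preceq VF par dfs u v && (u != v).

Definition fadj (par : T -> option T) : rel T :=
  fun x y => prel par x y || prel par y x.

(* p is (the tail of) a simple path u = x0, x1, ..., xk = v in F *)
Definition forest_path (par : T -> option T) (u v : T) (p : seq T) : bool :=
  [&& path (fadj par) u p, uniq (u :: p) & last u p == v].

Definition monochromatic_path (c : {set T} -> nat) (col : nat) (u : T) (p : seq T) : bool :=
  path (fun x y => c [set x; y] == col) u p.

Definition internal (v : T) (p : seq T) (z : T) : bool := (z \in p) && (z != v).

End GraphDefs.

(* Main.v *)
Require Import Defs.
From mathcomp Require Import all_boot.
From mathcomp Require Import zify.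
Set Implicit Arguments. Unset Strict Implicit. Unset Printing Implicit Defensive.

Section Main.
Variable T : finType.
Variable adj : rel T.
Variable M : {set {set T}}.
Variable c : {set T} -> nat.
Variable VF : {set T}.
Variable par : T -> option T.
Variable dfs : T -> nat.
Hypothesis Hpm : perfect_matching adj M.
Hypothesis H2 : edge_2_colouring adj c.
Hypothesis Hrf : rooted_forest adj M VF par.
Hypothesis Hdfs : dfs_indexing VF par dfs.
Hypothesis Hrl : forall x, x \in (forest_roots VF par :|: forest_leaves VF par) ->
     forall y, fadj par x y -> c [set x; y] = mcl M c x.

Local Notation anc := (anc par).
Local Notation mc := (mcl M c).
Definition f x := odflt x (par x).
Definition col y := c [set y; f y].

Lemma fE x y : par x = Some y -> f x = y.
Proof. by rewrite /f => ->. Qed.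

Lemma par_VF x y : par x = Some y -> y \in VF.
Proof. by case: Hrf => _ H _ /H []. Qed.

Lemma par_VF1 x y : par x = Some y -> x \in VF.
Proof. case: Hrf => H _ _ Hp; apply/negPn/negP => /H; by rewrite Hp. Qed.

Lemma par_adj x y : par x = Some y -> adj x y.
Proof. by case: Hrf => _ H _ /H []. Qed.

Lemma acyc x y : par x = Some y -> ~~ connect (prel par) y x.
Proof. case: Hrf => _ _ H Hp; apply: H; by rewrite /prel Hp. Qed.

Lemma par_neq x y : par x = Some y -> x != y.
Proof. move=> Hp; apply/eqP => E; have := acyc Hp; by rewrite E connect0. Qed.

Lemma anc_refl a : anc a a.
Proof. exact: connect0. Qed.

Lemma anc_trans a b d : anc a b -> anc b d -> anc a d.
Proof. rewrite /Defs.anc => H1 H2'; exact: connect_trans H2' H1. Qed.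

Lemma anc_par x y : par x = Some y -> anc y x.
Proof. move=> H; apply: connect1; by rewrite /prel H. Qed.

Lemma anc_cases a x : anc a x -> a = x \/ exists2 y, par x = Some y & anc a y.
Proof.
rewrite /Defs.anc => /connectP [[|y q]] /= ; first by move=> _ ->; left.
move=> /andP [Hxy Hq] ->; right; exists y; first exact/eqP.
by apply/connectP; exists q.
Qed.

Lemma anc_antisym a b : anc a b -> anc b a -> a = b.
Proof.
move=> H1 H2'; case: (anc_cases H1) => // [[y Hy Hay]].
have := acyc Hy; by move: (anc_trans H2' Hay); rewrite /Defs.anc => ->.
Qed.

Lemma anc_total a b t : anc a t -> anc b t -> anc a b \/ anc b a.
Proof.
rewrite /Defs.anc => /connectP [p Hp ->] /connectP [q Hq ->].
elim: p t q Hp Hq => [|y p IH] t q /=.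
  move=> _ Hq; right; apply/connectP; by exists q.
move=> /andP [Hty Hp]; case: q => [|z q] /=.
  move=> _; left; apply/connectP; exists (y :: p) => //=; by rewrite Hty.
move=> /andP [Htz Hq].
have E : y = z by move: Hty Htz; rewrite /prel => /eqP -> /eqP [].
subst z; exact: IH Hp Hq.
Qed.

Lemma child_on_chain x t : anc x t -> x != t -> exists2 y, anc y t & par y = Some x.
Proof.
rewrite /Defs.anc => /connectP [p Hp ->].
case/lastP: p Hp => [|q y] /=; first by rewrite eqxx.
rewrite rcons_path last_rcons => /andP [Hq Hl] _.
exists (last t q); first by apply/connectP; exists q.
exact/eqP.
Qed.

Lemma anc_VF a x : anc a x -> x \in VF -> a \in VF.
Proof.
move=> H Hx; case: (eqVneq a x) => [->//|ne].
by case: (child_on_chain H ne) => y _ /par_VF.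
Qed.

Lemma between_par t p w : par t = Some p -> anc w t -> anc p w -> w = t \/ w = p.
Proof.
move=> Hp Hw Hpw; case: (anc_cases Hw) => [->|[y]]; first by left.
rewrite Hp => -[<-] Hwp; right; exact: anc_antisym.
Qed.

Lemma sanc_par a x : anc a x -> a != x -> exists2 y, par x = Some y & anc a y.
Proof. by move=> H ne; case: (anc_cases H) => // E; rewrite E eqxx in ne. Qed.

Lemma same_tree_anc r a b : anc r a -> anc r b -> same_tree par a b.
Proof. move=> H1 H2'; apply/existsP; exists r; by rewrite H1 H2'. Qed.

Lemma dfs_le a b : anc a b -> b \in VF -> dfs a <= dfs b.
Proof.
move=> H Hb; have Ha := anc_VF H Hb.
have := (Hdfs Ha Hb (same_tree_anc (anc_refl a) H)).2; rewrite H.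
by move=> /esym /andP [].
Qed.

Lemma dfs_inj r a b : anc r a -> anc r b -> a \in VF -> b \in VF -> dfs a = dfs b -> a = b.
Proof. move=> H1 H2' Ha Hb; exact: (Hdfs Ha Hb (same_tree_anc H1 H2')).1. Qed.

Lemma dfs_lt a b : anc a b -> a != b -> b \in VF -> dfs a < dfs b.
Proof.
move=> H ne Hb; rewrite ltn_neqAle dfs_le // andbT; apply/eqP => E.
by move/eqP: ne; apply; apply: (dfs_inj (anc_refl a) H (anc_VF H Hb) Hb E).
Qed.

Definition seen x k := exists2 e, e \in edges adj & (x \in e) && (c e == k).

Lemma three_col x a b d : seen x a -> seen x b -> seen x d -> [\/ a = b, a = d | b = d].
Proof.
move=> [e1 E1 /andP [x1 /eqP c1]] [e2 E2 /andP [x2 /eqP c2]] [e3 E3 /andP [x3 /eqP c3]].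
case: (eqVneq a b) => [|ab]; first by constructor 1.
case: (eqVneq a d) => [|ad]; first by constructor 2.
case: (eqVneq b d) => [|bd]; first by constructor 3.
exfalso; have := H2 x; rewrite /seen_colours.
have mem k e : e \in edges adj -> x \in e -> c e = k ->
   k \in undup [seq c m | m in [set m in edges adj | x \in m]].
  move=> He Hx <-; rewrite mem_undup; apply: map_f; by rewrite mem_enum inE He Hx.
have U : uniq [:: a; b; d] by rewrite /= !inE negb_or ab ad bd.
have S : {subset [:: a; b; d] <= undup [seq c m | m in [set m in edges adj | x \in m]]}.
  move=> k; rewrite !inE => /or3P [] /eqP ->; [exact: mem E1 x1 c1|exact: mem E2 x2 c2|exact: mem E3 x3 c3].
by have := uniq_leq_size U S => /= H3 H4; move: (leq_trans H3 H4).
Qed.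

Lemma seen_mcl x : seen x (mc x).
Proof.
case: Hpm => Hsub Hcard; rewrite /mcl.
case: pickP => [m /andP [Hm Hx]|H].
  exists m => //; first exact: (subsetP Hsub). by rewrite Hx eqxx.
have := Hcard x; rewrite (eq_card0 (A := [set m in M | x \in m])) //.
by move=> m; rewrite inE H.
Qed.

Lemma par_edge y x : par y = Some x -> [set y; x] \in edges adj.
Proof.
move=> Hp; rewrite inE; apply/existsP; exists y; apply/existsP; exists x.
by rewrite par_adj // eqxx.
Qed.

Lemma seen_par y x : par y = Some x -> seen x (col y) /\ seen y (col y).
Proof.
move=> Hp; rewrite /col (fE Hp); split; exists [set y; x]; rewrite ?par_edge ?eqxx ?andbT //; by rewrite !inE eqxx ?orbT.
Qed.


Definition S := [set t in VF | (par t != None) && (col t == mc t)].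
Definition sanc a t := anc a t && (a != t).
Definition inD x k t := [&& t \in S, sanc x t, mc t == k &
  [forall w, (anc w t && sanc x w) ==> (col w == k) && ((w != t) ==> (mc w != k))]].
Definition ismin x k t := inD x k t && [forall t', inD x k t' ==> (dfs t <= dfs t')].
Definition arrive t x := inD x (mc t) t && [forall w, (sanc w t && sanc x w) ==> ismin w (mc t) t].
Definition cont t x := [&& mc x != mc t, par x != None, col x == mc t & ismin x (mc t) t].

Lemma SP t : t \in S -> t \in VF /\ (exists2 p, par t = Some p & col t = mc t).
Proof.
rewrite inE => /andP [-> /andP [H /eqP C]]; split => //.
by case: (par t) H => // p _; exists p.
Qed.

Lemma inDP x k t : inD x k t -> [/\ t \in S, anc x t, x != t, mc t = k &
  forall w, anc w t -> anc x w -> x != w -> col w = k /\ (w != t -> mc w != k)].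
Proof.
case/and4P => HS /andP [H1 H2'] /eqP H3 /forallP H4; split => // w Hw Hxw ne.
have := H4 w; rewrite Hw /sanc Hxw ne /= => /andP [/eqP -> H5]; split => // /(implyP H5) //.
Qed.

Lemma inDI x k t : t \in S -> anc x t -> x != t -> mc t = k ->
  (forall w, anc w t -> anc x w -> x != w -> col w = k /\ (w != t -> mc w != k)) -> inD x k t.
Proof.
move=> HS H1 H2' H3 H4; rewrite /inD HS /sanc H1 H2' H3 eqxx /=.
apply/forallP => w; apply/implyP => /andP [Hw /andP [Hxw ne]].
case: (H4 w Hw Hxw ne) => -> H5; rewrite eqxx /=; exact/implyP.
Qed.

Lemma inD_VF x k t : inD x k t -> t \in VF.
Proof. by case/inDP => /SP []. Qed.

Lemma ismin_uniq x k a b : ismin x k a -> ismin x k b -> a = b.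
Proof.
move=> /andP [Ha /forallP Fa] /andP [Hb /forallP Fb].
have l2 := implyP (Fa b) Hb; have l1 := implyP (Fb a) Ha.
have Va := inD_VF Ha; have Vb := inD_VF Hb.
case/inDP: Ha => _ Ha _ _ _; case/inDP: Hb => _ Hb _ _ _.
apply: (dfs_inj Ha Hb Va Vb); apply/eqP; by rewrite eqn_leq l1 l2.
Qed.

Lemma ismin_ex x k t : inD x k t -> exists m, ismin x k m.
Proof.
move=> Ht; case: (@arg_minnP _ t (inD x k) dfs Ht) => m Hm Hmin.
exists m; rewrite /ismin Hm; apply/forallP => t'; apply/implyP; exact: Hmin.
Qed.

Lemma Dsub x k m w : inD x k m -> anc w m -> w != m -> anc x w -> x != w ->
  inD w k m /\ (forall t', inD w k t' -> inD x k t').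
Proof.
move=> Hm Hwm nwm Hxw nxw; have [HS Hxm nxm Hk Hc] := inDP Hm.
split.
  apply: inDI => // w' Hw' Hww' nww'; apply: Hc => //; first exact: anc_trans Hxw Hww'.
  apply/eqP => E; subst w'; move/eqP: nww'; apply; exact: anc_antisym.
move=> t' Ht'; have [HS' Hwt' nwt' Hk' Hc'] := inDP Ht'.
apply: inDI => //; first exact: anc_trans Hxw Hwt'.
  apply/eqP => E; subst t'; move/eqP: nxw; apply; exact: anc_antisym.
move=> w' Hw't' Hxw' nxw'.
case: (anc_total Hw't' Hwt') => Hc2.
  have Hw'm : anc w' m := anc_trans Hc2 Hwm.
  have [c1 c2] := Hc w' Hw'm Hxw' nxw'; split => // _; apply: c2.
  apply/eqP => E; subst w'; move/eqP: nwm; apply; exact: anc_antisym.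
case: (eqVneq w w') => [E|ne]; last exact: Hc'.
subst w'; have [c1 c2] := Hc w Hwm Hxw nxw; split => // _; exact: c2.
Qed.

Lemma ismin_sub x k m w : ismin x k m -> anc w m -> w != m -> anc x w -> x != w -> ismin w k m.
Proof.
move=> /andP [Hm /forallP Hmin] H1 H2' H3 H4; have [D1 D2] := Dsub Hm H1 H2' H3 H4.
rewrite /ismin D1; apply/forallP => t'; apply/implyP => /D2 Ht'; exact: (implyP (Hmin t')).
Qed.

Lemma arriveP t x : arrive t x -> inD x (mc t) t /\
  (forall w, anc w t -> w != t -> anc x w -> x != w -> ismin w (mc t) t).
Proof.
case/andP => H1 /forallP H; split => // w a b d e; apply: (implyP (H w)).
by rewrite /sanc a b d e.
Qed.

Lemma arriveI t x : inD x (mc t) t ->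
  (forall w, anc w t -> w != t -> anc x w -> x != w -> ismin w (mc t) t) -> arrive t x.
Proof.
move=> H1 H; rewrite /arrive H1; apply/forallP => w; apply/implyP => /andP [/andP [a b] /andP [d e]].
exact: H.
Qed.

Lemma arrive_par t p : t \in S -> par t = Some p -> arrive t p.
Proof.
move=> HS Hp; have [HV [p' Hp' Hc]] := SP HS; rewrite Hp in Hp'; case: Hp' => E; subst p'.
have np : p != t by rewrite eq_sym par_neq.
apply: arriveI.
  apply: inDI => //; first exact: anc_par.
  move=> w Hw Hpw npw; case: (between_par Hp Hw Hpw) => E; subst w; last by rewrite eqxx in npw.
  by rewrite eqxx.
move=> w Hw nwt Hpw npw; case: (between_par Hp Hw Hpw) => E; subst w.
  by rewrite eqxx in nwt.
by rewrite eqxx in npw.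
Qed.

Lemma contP t x : cont t x -> [/\ mc x != mc t, (exists x', par x = Some x'), col x = mc t & ismin x (mc t) t].
Proof.
case/and4P => a b /eqP d e; split => //; by case: (par x) b => // x' _; exists x'.
Qed.

Lemma arrive_cont t x x' : arrive t x -> cont t x -> par x = Some x' -> arrive t x'.
Proof.
move=> /arriveP [Hx Hw] /contP [n1 _ c1 m1] Hp.
have [HS Hxt nxt Hk Hc] := inDP Hx.
have Hx'x := anc_par Hp.
have nxx' : x' != x by rewrite eq_sym par_neq.
have Hx't := anc_trans Hx'x Hxt.
have nx't : x' != t.
  apply/eqP => E; subst x'; move/eqP: nxt; apply; exact: anc_antisym.
have cls w : anc w t -> anc x' w -> x' != w -> w = x \/ (anc x w /\ x != w).
  move=> Hwt Hx'w nx'w; case: (eqVneq x w) => [->|nxw]; first by left.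
  right; split => //; case: (anc_total Hwt Hxt) => // Hwx.
  have nwx : w != x by rewrite eq_sym.
  case: (sanc_par Hwx nwx) => y.
  rewrite Hp => -[<-] Hwx'; exfalso; move/eqP: nx'w; apply; exact: anc_antisym.
apply: arriveI.
  apply: inDI => // w Hwt Hx'w nx'w; case: (cls w Hwt Hx'w nx'w) => [E|[a b]].
    by subst w; split => // _; rewrite eq_sym.
  exact: Hc.
move=> w Hwt nwt Hx'w nx'w; case: (cls w Hwt Hx'w nx'w) => [E|[a b]]; first by subst w.
exact: Hw.
Qed.

Lemma stop_ex t : t \in S -> exists x, arrive t x && ~~ cont t x.
Proof.
move=> HS; have [HV [p Hp _]] := SP HS; have Ha := arrive_par HS Hp.
case: (@arg_minnP _ p (arrive t) dfs Ha) => x Hx Hmin.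
exists x; rewrite Hx /=; apply/negP => Hc.
have [_ [x' Hx'] _ _] := contP Hc.
have := Hmin x' (arrive_cont Hx Hc Hx').
have [_ Hxt _ _ _] := inDP (arriveP Hx).1.
have HxV := anc_VF Hxt HV.
by rewrite leqNgt dfs_lt // ?anc_par // eq_sym par_neq.
Qed.

Definition dn : rel T := fun a b => prel par b a.

Lemma prelP a b : prel par a b -> par a = Some b.
Proof. by move/eqP. Qed.

Lemma down_all p u y : prel par y u -> path (fadj par) y p -> uniq (u :: y :: p) -> path dn y p.
Proof.
elim: p u y => [//|z p IH] u y Hyu /= /andP [Hyz Hp] Hu.
have Hzy : prel par z y.
  case/orP: Hyz => // /prelP Hyz; move/prelP: Hyu; rewrite Hyz => -[E]; subst z.
  by move: Hu; rewrite /= !inE eqxx !orbT.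
rewrite /dn Hzy /=; apply: (IH y) => //; by case/andP: Hu.
Qed.

Lemma PD u p : path (fadj par) u p -> uniq (u :: p) ->
  exists p1 p2, [/\ p = p1 ++ p2, path (prel par) u p1 & path dn (last u p1) p2].
Proof.
elim: p u => [|y p IH] u /=; first by move=> _ _; exists [::], [::].
move=> /andP [Huy Hp] Hu; case/orP: Huy => Huy.
  case: (IH y Hp) => [|p1 [p2 [E P1 P2]]]; first by case/andP: Hu.
  by exists (y :: p1), p2; rewrite E /= Huy.
exists [::], (y :: p); split => //=; rewrite /dn Huy /=; exact: (down_all Huy).
Qed.

Lemma up_mem u p : path (prel par) u p -> forall w, w \in u :: p -> anc w u /\ anc (last u p) w.
Proof.
elim: p u => [|y p IH] u /=.
  by move=> _ w; rewrite inE => /eqP ->; split; apply: anc_refl.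
move=> /andP [/prelP Huy Hp] w; rewrite inE => /orP [/eqP ->|Hw].
  split; first exact: anc_refl.
  exact: anc_trans (IH y Hp y (mem_head _ _)).2 (anc_par Huy).
have [a b] := IH y Hp w Hw; split => //; exact: anc_trans a (anc_par Huy).
Qed.

Lemma up_complete u p a : path (prel par) u p -> anc a u -> anc (last u p) a -> a \in u :: p.
Proof.
elim: p u => [|y p IH] u /=.
  by move=> _ H1 H2'; rewrite (anc_antisym H1 H2') mem_head.
move=> /andP [/prelP Huy Hp] Hau Hla; case: (anc_cases Hau) => [->|[y' Hy' Hay]]; first exact: mem_head.
rewrite Huy in Hy'; case: Hy' => E; subst y'.
by rewrite inE (IH y Hp Hay Hla) orbT.
Qed.

Lemma dn_mem u p : path dn u p -> forall w, w \in u :: p -> anc u w /\ anc w (last u p).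
Proof.
elim: p u => [|y p IH] u /=.
  by move=> _ w; rewrite inE => /eqP ->; split; apply: anc_refl.
move=> /andP [/prelP Hyu Hp] w; rewrite inE => /orP [/eqP ->|Hw].
  split; first exact: anc_refl.
  exact: anc_trans (anc_par Hyu) (IH y Hp y (mem_head _ _)).2.
have [a b] := IH y Hp w Hw; split => //; exact: anc_trans (anc_par Hyu) a.
Qed.

Lemma dn_complete u p a : path dn u p -> anc a (last u p) -> anc u a -> a \in u :: p.
Proof.
elim: p u => [|y p IH] u /=.
  by move=> _ H1 H2'; rewrite (anc_antisym H1 H2') mem_head.
move=> /andP [/prelP Hyu Hp] Hal Hua.
have Hyl := (dn_mem Hp (mem_head _ _)).2.
case: (anc_total Hal Hyl) => Hc.
  case: (anc_cases Hc) => [->|[y' Hy' Hay]]; first by rewrite !inE eqxx orbT.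
  rewrite Hyu in Hy'; case: Hy' => E; subst y'.
  by rewrite (anc_antisym Hay Hua) mem_head.
by rewrite inE (IH y Hp Hal Hc) orbT.
Qed.

Definition Rk k : rel T := fun a b => c [set a; b] == k.

Lemma mono_up k t p : path (prel par) t p ->
  (forall w, anc w t -> anc (last t p) w -> last t p != w -> col w = k) -> path (Rk k) t p.
Proof.
elim: p t => [//|y p IH] t /= /andP [/prelP Hty Hp] H.
have Hly := (up_mem Hp (mem_head _ _)).2.
have Hyt := anc_par Hty.
rewrite IH //; last first.
  move=> w Hwy Hl nl; apply: H => //; exact: anc_trans Hwy Hyt.
rewrite andbT /Rk -(fE Hty) -/(col t) H //; first exact: anc_refl.
  exact: anc_trans Hly Hyt.
apply/eqP => E; rewrite E in Hly; move: (par_neq Hty); by rewrite (anc_antisym Hly Hyt) eqxx.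
Qed.

Lemma mono_dn k u p : path dn u p ->
  (forall w, anc w (last u p) -> anc u w -> u != w -> col w = k) -> path (Rk k) u p.
Proof.
elim: p u => [//|y p IH] u /= /andP [/prelP Hyu Hp] H.
have Hyl := (dn_mem Hp (mem_head _ _)).2.
have Huy := anc_par Hyu.
have nuy : u != y by rewrite eq_sym par_neq.
rewrite IH //; last first.
  move=> w Hwl Hyw nyw; apply: H => //; first exact: anc_trans Huy Hyw.
  apply/eqP => E; subst w; move/eqP: nuy; apply; exact: anc_antisym.
by rewrite andbT /Rk setUC -(fE Hyu) -/(col y) H.
Qed.

Definition xs t := odflt t [pick x | arrive t x && ~~ cont t x].

Lemma xsP t : t \in S -> arrive t (xs t) && ~~ cont t (xs t).
Proof.
move=> HS; rewrite /xs; case: pickP => [x -> //|H].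
by case: (stop_ex HS) => x; rewrite H.
Qed.

Definition partner t := if mc (xs t) == mc t then xs t else odflt t [pick m | ismin (xs t) (mc t) m].
Definition lost t := (mc (xs t) != mc t) && ismin (xs t) (mc t) t.
Definition P := [set t in S | ~~ lost t].

Definition junc z v k := [/\ mc z != k, ismin z k v & exists2 y, par y = Some z & col y = k].

Lemma uniq_disj (s1 s2 : seq T) a : uniq (s1 ++ s2) -> a \in s1 -> a \in s2 -> False.
Proof. by rewrite cat_uniq => /and3P [_ /hasPn H _] H1 /H; rewrite H1. Qed.

Lemma cont_between t x z : inD x (mc t) t ->
  (forall w, anc w t -> w != t -> anc x w -> x != w -> ismin w (mc t) t) ->
  anc z t -> z != t -> anc x z -> x != z -> cont t z.
Proof.
move=> HD Hb Hzt nzt Hxz nxz; have [_ _ _ _ Hc] := inDP HD.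
have [c1 c2] := Hc z Hzt Hxz nxz.
have [y Hy _] := sanc_par Hxz nxz.
by rewrite /cont (c2 nzt) Hy c1 eqxx /= Hb.
Qed.

Lemma pair_props t : t \in P ->
 [/\ prec VF par dfs t (partner t), mc t = mc (partner t),
   forall p, forest_path par t (partner t) p -> monochromatic_path c (mc t) t p
   & forall p z, forest_path par t (partner t) p -> internal (partner t) p z ->
       [\/ cont t z, cont (partner t) z | junc z (partner t) (mc t)]].
Proof.
rewrite inE => /andP [HS Hnl].
have HV := (SP HS).1.
have /andP [Harr Hnc] := xsP HS.
set x := xs t in Harr Hnc Hnl *.
have [HD Hb] := arriveP Harr.
have [_ Hxt nxt _ Hc] := inDP HD.
have HxV := anc_VF Hxt HV.
rewrite /partner -/x.
case: (eqVneq (mc x) (mc t)) => Ek.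
  split.
  - by rewrite /prec /preceq HV HxV (same_tree_anc Hxt (anc_refl x)) dfs_le //= eq_sym.
  - by [].
  - move=> p /and3P [Hp Hu /eqP Hl].
    have [p1 [p2 [E P1 P2]]] := PD Hp Hu.
    have Htop := (up_mem P1 (mem_last _ _)).2.
    have : p2 = [::].
      case: p2 E P2 => // y q E P2; exfalso.
      have Hlx : last (last t p1) (y :: q) = x by rewrite -Hl E last_cat.
      have Hx1 : x \in t :: p1.
        apply: up_complete P1 Hxt _; rewrite -Hlx; exact: (dn_mem P2 (mem_head _ _)).2.
      have Hx2 : x \in y :: q by rewrite -Hlx /=; exact: mem_last.
      by apply: (uniq_disj (s1 := t :: p1) _ Hx1 Hx2); rewrite /= -E.
    move=> E2; subst p2; rewrite cats0 in E; subst p1.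
    apply: mono_up => // w Hwt; rewrite Hl => Hxw nxw; exact: (Hc w Hwt Hxw nxw).1.
  - move=> p z /and3P [Hp Hu /eqP Hl] /andP [Hzp nzx].
    have [p1 [p2 [E P1 P2]]] := PD Hp Hu.
    have : p2 = [::].
      case: p2 E P2 => // y q E P2; exfalso.
      have Hlx : last (last t p1) (y :: q) = x by rewrite -Hl E last_cat.
      have Hx1 : x \in t :: p1.
        apply: up_complete P1 Hxt _; rewrite -Hlx; exact: (dn_mem P2 (mem_head _ _)).2.
      have Hx2 : x \in y :: q by rewrite -Hlx /=; exact: mem_last.
      by apply: (uniq_disj (s1 := t :: p1) _ Hx1 Hx2); rewrite /= -E.
    move=> E2; subst p2; rewrite cats0 in E; subst p1.
    have [Hzt Hxz] := up_mem P1 (w := z) ltac:(by rewrite inE Hzp orbT); rewrite Hl in Hxz.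
    have nzt : z != t by apply/eqP => E; subst z; case/andP: Hu => /negP.
    constructor 1; apply: (cont_between HD Hb) => //; by rewrite eq_sym.
have Hnm : ~~ ismin x (mc t) t by move: Hnl; rewrite /lost -/x Ek.
case: pickP => [m Hm|H]; last by case: (ismin_ex HD) => m; rewrite H.
rewrite /=.
have nmt : m != t by apply/eqP => E; subst m; rewrite Hm in Hnm.
have Hm' := Hm; case/andP: Hm' => HmD /forallP Hmin.
have [HSm Hxm nxm Hkm Hcm] := inDP HmD.
have HmV := (SP HSm).1.
have Hdm : dfs m <= dfs t := implyP (Hmin t) HD.
have top_x : forall p, forest_path par t m p -> exists p1 p2,
   [/\ p = p1 ++ p2, path (prel par) t p1, path dn x p2, last t p1 = x & last x p2 = m].
  move=> p /and3P [Hp Hu /eqP Hl].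
  have [p1 [p2 [E P1 P2]]] := PD Hp Hu.
  set top := last t p1 in P2.
  have Hlm : last top p2 = m by rewrite -Hl E last_cat.
  have Htt : anc top t := (up_mem P1 (mem_last _ _)).1.
  have Htm : anc top m by rewrite -Hlm; exact: (dn_mem P2 (mem_head _ _)).2.
  suff Etop : top = x by exists p1, p2; rewrite -Etop.
  case: (eqVneq top x) => // ntx; exfalso.
  case: (anc_total Htt Hxt) => Hc2.
    have Hx1 : x \in t :: p1 by apply: up_complete P1 Hxt Hc2.
    have Hx2 : x \in top :: p2 by apply: dn_complete P2 _ Hc2; rewrite Hlm.
    move: Hx2; rewrite inE eq_sym (negbTE ntx) /= => Hx2.
    by apply: (uniq_disj (s1 := t :: p1) _ Hx1 Hx2); rewrite /= -E.
  have nxt' : x != top by rewrite eq_sym.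
  case: (eqVneq top t) => [Et|ntt].
    rewrite Et in Htm; have [_ c2] := Hcm t Htm Hxt nxt.
    have ntm' : t != m by rewrite eq_sym.
    by move: (c2 ntm'); rewrite eqxx.
  case: (eqVneq top m) => [Em|ntm].
    rewrite Em in Htt; have [_ c2] := Hc m Htt Hxm nxm.
    by move: (c2 nmt); rewrite Hkm eqxx.
  have H1 := Hb top Htt ntt Hc2 nxt'.
  have [H3 _] := Dsub HmD Htm ntm Hc2 nxt'.
  case/andP: H1 => _ /forallP H1; have Hdt := implyP (H1 m) H3.
  by move/eqP: nmt; apply; apply: (dfs_inj Hxm Hxt HmV HV); apply/eqP; rewrite eqn_leq Hdm Hdt.
split.
- rewrite /prec /preceq HV HmV (same_tree_anc Hxt Hxm) Hdm /=; by rewrite eq_sym.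
- by [].
- move=> p Hp; have [p1 [p2 [E P1 P2 L1 L2]]] := top_x p Hp.
  rewrite /monochromatic_path E cat_path L1; apply/andP; split.
    apply: mono_up => // w Hwt; rewrite L1 => Hxw nxw; exact: (Hc w Hwt Hxw nxw).1.
  apply: mono_dn => // w; rewrite L2 => Hwm Hxw nxw; exact: (Hcm w Hwm Hxw nxw).1.
- move=> p z Hp /andP [Hzp nzm]; have [p1 [p2 [E P1 P2 L1 L2]]] := top_x p Hp.
  case/and3P: Hp => _ Hu _.
  have Hj : junc x m (mc t).
    split => //; case: (child_on_chain Hxt nxt) => y Hyt Hy; exists y => //.
    have nxy : x != y by rewrite eq_sym par_neq.
    exact: (Hc y Hyt (anc_par Hy) nxy).1.
  move: Hzp; rewrite E mem_cat => /orP [Hz|Hz].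
    have [Hzt Hxz] := up_mem P1 (w := z) ltac:(by rewrite inE Hz orbT); rewrite L1 in Hxz.
    have nzt : z != t by apply/eqP => E'; subst z; move: Hu; rewrite E /= mem_cat Hz.
    case: (eqVneq x z) => [Exz|nxz]; first by subst z; constructor 3.
    constructor 1; exact: (cont_between HD Hb).
  have [Hxz Hzm] := dn_mem P2 (w := z) ltac:(by rewrite inE Hz orbT); rewrite L2 in Hzm.
  case: (eqVneq x z) => [Exz|nxz]; first by subst z; constructor 3.
  constructor 2.
  have Hb' : forall w, anc w m -> w != m -> anc x w -> x != w -> ismin w (mc m) m.
    move=> w a b d e; rewrite Hkm; exact: ismin_sub Hm a b d e.
  by apply: (cont_between _ Hb') => //; rewrite Hkm.
Qed.

Definition L := forest_leaves VF par.

Lemma L_S x : x \in L -> x \in S.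
Proof.
move=> HL; have HL' := HL; rewrite inE in HL'; case/and3P: HL' => HV Hn _.
rewrite inE HV Hn /=.
case E: (par x) Hn => [p|//] _.
have HU : x \in forest_roots VF par :|: forest_leaves VF par by rewrite inE HL orbT.
have := Hrl HU (y := p); rewrite /fadj /prel E eqxx /= => /(_ isT) <-.
by rewrite /col (fE E).
Qed.

Lemma lost_props t : t \in S -> lost t ->
  [/\ xs t \in S, xs t \notin L & exists2 y, par y = Some (xs t) & col y = mc t].
Proof.
move=> HS /andP [nk Hmin].
have HV := (SP HS).1.
have /andP [Harr Hnc] := xsP HS.
set x := xs t in nk Hmin Harr Hnc *.
have [HD Hb] := arriveP Harr.
have [_ Hxt nxt _ Hc] := inDP HD.
case: (child_on_chain Hxt nxt) => y Hyt Hy.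
have nxy : x != y by rewrite eq_sym par_neq.
have Hcy : col y = mc t := (Hc y Hyt (anc_par Hy) nxy).1.
have HxV := par_VF Hy.
have Hcx : exists2 x', par x = Some x' & col x = mc x.
  case E: (par x) => [x'|].
    exists x' => //.
    have [H3 H4 H5] : [/\ seen x (mc x), seen x (col y) & seen x (col x)].
      by split; [exact: seen_mcl | exact: (seen_par Hy).1 | exact: (seen_par E).2].
    case: (three_col H3 H4 H5) => [E1|->//|E1]; first by rewrite E1 Hcy eqxx in nk.
    exfalso; move: Hnc; rewrite /cont nk E /= -E1 Hcy eqxx Hmin //.
  exfalso.
  have HR : x \in forest_roots VF par :|: forest_leaves VF par by rewrite !inE HxV E.
  have := Hrl HR (y := y); rewrite /fadj /prel Hy eqxx orbT => /(_ isT).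
  move=> E2; have : col y = mc x by rewrite /col (fE Hy) setUC.
  by rewrite Hcy => E3; rewrite E3 eqxx in nk.
case: Hcx => x' Hx' Hcx; split.
- by rewrite inE HxV Hx' Hcx eqxx.
- rewrite inE negb_and; apply/orP; right; rewrite negb_and; apply/orP; right.
  rewrite negb_forall; apply/existsP; exists y; by rewrite Hy eqxx.
- by exists y.
Qed.

Lemma lost_inj t1 t2 : t1 \in S -> t2 \in S -> lost t1 -> lost t2 -> xs t1 = xs t2 -> t1 = t2.
Proof.
move=> S1 S2 l1 l2 E.
have [_ _ [y1 Hy1 C1]] := lost_props S1 l1.
have [_ _ [y2 Hy2 C2]] := lost_props S2 l2.
case/andP: l1 => n1 m1; case/andP: l2 => n2 m2.
rewrite E in Hy1 n1 m1.
have := three_col (seen_mcl (xs t2)) (seen_par Hy1).1 (seen_par Hy2).1.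
rewrite C1 C2 => -[E1|E1|E1]; first by rewrite E1 eqxx in n1.
  by rewrite E1 eqxx in n2.
rewrite E1 in m1; exact: ismin_uniq m1 m2.
Qed.

Lemma count_P : #|L| <= #|P|.
Proof.
set Lo := [set t in S | lost t].
have h1 : #|Lo| <= #|S :\: L|.
  rewrite -(@card_in_imset _ _ xs Lo).
    apply: subset_leq_card; apply/subsetP => y /imsetP [t] /setIdP [HS Hl] ->.
    have [a b _] := lost_props HS Hl; by apply/setDP.
  move=> a b /setIdP [Sa la] /setIdP [Sb lb]; exact: lost_inj.
have h2 : #|S :&: L| + #|S :\: L| = #|S| := cardsID L S.
have h3 : S :&: L = L by apply/setIidPr; apply/subsetP => x; exact: L_S.
have h4 : #|S :&: Lo| + #|S :\: Lo| = #|S| := cardsID Lo S.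
have h5 : S :&: Lo = Lo by apply/setIidPr; apply/subsetP => x /setIdP [].
have h6 : S :\: Lo = P.
  apply/setP => x; apply/setDP/setIdP => [[a b]|[a b]]; split => //.
    by apply: contra b => l; apply/setIdP.
  by apply: contra b => /setIdP [].
rewrite h3 in h2; rewrite h5 h6 in h4; lia.
Qed.

Definition klass t z := [\/ cont t z, cont (partner t) z | junc z (partner t) (mc t)].

Lemma cont_cont s1 s2 z : cont s1 z -> cont s2 z -> s1 = s2.
Proof.
move=> /contP [_ _ c1 m1] /contP [_ _ c2 m2]; rewrite c1 in c2.
rewrite c2 in m1; exact: ismin_uniq m1 m2.
Qed.

Lemma cont_junc s z v k : cont s z -> junc z v k -> s = v.
Proof.
move=> /contP [n1 [z' Hz'] c1 m1] [n2 m2 [y Hy cy]].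
have := three_col (seen_mcl z) (seen_par Hz').2 (seen_par Hy).1.
rewrite c1 cy => -[E|E|E]; first by rewrite E eqxx in n1.
  by rewrite E eqxx in n2.
rewrite E in m1; exact: ismin_uniq m1 m2.
Qed.

Lemma junc_junc z v1 k1 v2 k2 : junc z v1 k1 -> junc z v2 k2 -> v1 = v2.
Proof.
move=> [n1 m1 [y1 Hy1 c1]] [n2 m2 [y2 Hy2 c2]].
have := three_col (seen_mcl z) (seen_par Hy1).1 (seen_par Hy2).1.
rewrite c1 c2 => -[E|E|E]; first by rewrite E eqxx in n1.
  by rewrite E eqxx in n2.
rewrite E in m1; exact: ismin_uniq m1 m2.
Qed.

Lemma Mpart a b b' : [set a; b] \in M -> [set a; b'] \in M -> b != a -> b' != a -> b = b'.
Proof.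
move=> H1 H2' n1 n2; case: Hpm => _ /(_ a) /eqP /cards1P [m0 Hm0].
have E1 : [set a; b] \in [set m0] by rewrite -Hm0 inE H1 !inE eqxx.
have E2 : [set a; b'] \in [set m0] by rewrite -Hm0 inE H2' !inE eqxx.
move: E1 E2; rewrite !inE => /eqP E1 /eqP E2.
have : b \in [set a; b'] by rewrite E2 -E1 !inE eqxx orbT.
by rewrite !inE (negbTE n1) => /eqP.
Qed.

Lemma prec_anti a b : prec VF par dfs a b -> prec VF par dfs b a -> False.
Proof.
case/andP => /and4P [Ha Hb /existsP [r /andP [r1 r2]] d1] n1 /andP [/and4P [_ _ _ d2] _].
move/eqP: n1; apply; apply: (dfs_inj r1 r2 Ha Hb); apply/eqP; by rewrite eqn_leq d1 d2.
Qed.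

Lemma no_share t1 t2 z : t1 \in P -> t2 \in P -> t1 != t2 ->
  [set t1; partner t1] \in M -> [set t2; partner t2] \in M ->
  klass t1 z -> klass t2 z -> False.
Proof.
move=> P1 P2 n12 M1 M2 K1 K2.
have [pr1 _ _ _] := pair_props P1.
have [pr2 _ _ _] := pair_props P2.
set v1 := partner t1 in M1 K1 pr1; set v2 := partner t2 in M2 K2 pr2.
have nv1 : v1 != t1 by case/andP: pr1 => _; rewrite eq_sym.
have nv2 : v2 != t2 by case/andP: pr2 => _; rewrite eq_sym.
have d11 : t1 <> t2 by apply/eqP.
have d22 : v1 <> v2.
  move=> E; apply: d11; apply: (Mpart (a := v1)).
  - by rewrite setUC.
  - by rewrite E setUC.
  - by rewrite eq_sym.
  - by rewrite E eq_sym.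
have d12 : t1 <> v2.
  move=> E; have M2' : [set t1; t2] \in M by rewrite E setUC.
  have E3 : t2 = v1 by apply: (Mpart M2' M1 _ nv1); rewrite eq_sym; apply/eqP.
  apply: (prec_anti pr1); by rewrite -E3 E.
have d21 : v1 <> t2.
  move=> E; have M1' : [set t2; t1] \in M by rewrite -E setUC.
  have E3 : t1 = v2 by apply: (Mpart M1' M2 _ nv2); apply/eqP.
  apply: (prec_anti pr2); by rewrite -E3 -E.
case: K1 => [H1|H1|H1]; case: K2 => [G1|G1|G1].
- exact: d11 (cont_cont H1 G1).
- exact: d12 (cont_cont H1 G1).
- exact: d12 (cont_junc H1 G1).
- exact: d21 (cont_cont H1 G1).
- exact: d22 (cont_cont H1 G1).
- exact: d22 (cont_junc H1 G1).
- exact: d21 (esym (cont_junc G1 H1)).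
- exact: d22 (esym (cont_junc G1 H1)).
- exact: d22 (junc_junc H1 G1).
Qed.

Lemma main_thm : exists u v : 'I_#|forest_leaves VF par| -> T,
    (injective u) /\
    [/\ forall i, prec VF par dfs (u i) (v i),
        forall i, mcl M c (u i) = mcl M c (v i),
        forall i p, forest_path par (u i) (v i) p -> monochromatic_path c (mcl M c (u i)) (u i) p,
        forall i p z, forest_path par (u i) (v i) p -> internal (v i) p z ->
          mcl M c z != mcl M c (u i) &
        forall i j, i != j -> [set u i; v i] \in M -> [set u j; v j] \in M ->
          forall p q, forest_path par (u i) (v i) p -> forest_path par (u j) (v j) q ->
          forall z, internal (v i) p z -> ~~ internal (v j) q z].
Proof.
have Hle : #|L| <= #|P| := count_P.
pose u := fun i : 'I_#|forest_leaves VF par| => (enum_val (widen_ord Hle i) : T).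
have Hu i : u i \in P by apply: enum_valP.
exists u, (fun i => partner (u i)).
split.
  by move=> i j /enum_val_inj /(congr1 val) /= E; apply: val_inj.
split.
- by move=> i; have [] := pair_props (Hu i).
- by move=> i; have [] := pair_props (Hu i).
- by move=> i; have [] := pair_props (Hu i).
- move=> i p z Hp Hz; have [_ Ek _ K] := pair_props (Hu i).
  case: (K p z Hp Hz) => [/contP [] //|/contP [] n _ _ _|[] //]; by rewrite Ek.
- move=> i j nij M1 M2 p q Hp Hq z Hz1; apply/negP => Hz2.
  have [_ _ _ K1] := pair_props (Hu i).
  have [_ _ _ K2] := pair_props (Hu j).
  have nu : u i != u j by apply: contra nij => /eqP /enum_val_inj /(congr1 val) /= E; apply/eqP; apply: val_inj.
  exact: (no_share (Hu i) (Hu j) nu M1 M2 (K1 p z Hp Hz1) (K2 q z Hq Hz2)).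
Qed.

End Main.


Theorem lemma3 (T : finType) (adj : rel T) (M : {set {set T}})
  (c : {set T} -> nat) (VF : {set T}) (par : T -> option T) (dfs : T -> nat) :
  simple_graph adj ->
  perfect_matching adj M ->
  optimal_2_colouring adj c ->
  rooted_forest adj M VF par ->
  dfs_indexing VF par dfs ->
  (forall x, x \in (forest_roots VF par :|: forest_leaves VF par) ->
     forall y, fadj par x y -> c [set x; y] = mcl M c x) ->
  exists u v : 'I_#|forest_leaves VF par| -> T,
    (injective u) /\
    [/\ forall i, prec VF par dfs (u i) (v i),
        forall i, mcl M c (u i) = mcl M c (v i),
        forall i p, forest_path par (u i) (v i) p -> monochromatic_path c (mcl M c (u i)) (u i) p,
        forall i p z, forest_path par (u i) (v i) p -> internal (v i) p z ->
          mcl M c z != mcl M c (u i) &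
        forall i j, i != j -> [set u i; v i] \in M -> [set u j; v j] \in M ->
          forall p q, forest_path par (u i) (v i) p -> forest_path par (u j) (v j) q ->
          forall z, internal (v i) p z -> ~~ internal (v j) q z].
Proof.
move=> _ Hpm [H2 _] Hrf Hdfs Hrl.
exact: (main_thm Hpm H2 Hrf Hdfs Hrl).
Qed.
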